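(* Let $P$ be a finite poset and $q$ a positive integer. For every $f\in\mathrm{Inc}^q(P)$, $\mathrm{IncPro}(f)=\mathrm{JdtPro}(f)$.
   Context: $\mathrm{Inc}^q(P)$ is the set of $f:P\to\{1,\dots,q\}$ with $p_1<p_2\Rightarrow f(p_1)<f(p_2)$. For $1\le i\le q-1$, $\rho_i(f)(x)=i+1$ if $f(x)=i$ and changing only the value at $x$ to $i+1$ yields an element of $\mathrm{Inc}^q(P)$; $\rho_i(f)(x)=i$ if $f(x)=i+1$ and changing only the value at $x$ to $i$ yields an element of $\mathrm{Inc}^q(P)$; $\rho_i(f)(x)=f(x)$ otherwise. $\mathrm{IncPro}=\rho_{q-1}\circ\cdots\circ\rho_1$. Jeu de taquin promotion: consider labelings $g:P\to\mathbb{Z}\cup\{\square\}$. The slide $\sigma_i$ is defined (simultaneously at all $x$, using the values of $g$) by $\sigma_i(g)(x)=i$ if $g(x)=\square$ and $g(y)=i$ for some $y\gtrdot x$; $\sigma_i(g)(x)=\square$ if $g(x)=i$ and $g(z)=\square$ for some $z\lessdot x$; $\sigma_i(g)(x)=g(x)$ otherwise. $\sigma_{a\to b}$ replaces every label $a$ by $b$. Set $jdt(f)=\sigma_{\square\to q+1}\circ\sigma_q\circ\sigma_{q-1}\circ\cdots\circ\sigma_2\circ\sigma_{1\to\square}(f)$ and $\mathrm{JdtPro}(f)(x)=jdt(f)(x)-1$. *)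

(* Defs.v *)
From mathcomp Require Import all_boot all_order all_algebra.
Set Implicit Arguments. Unset Strict Implicit. Unset Printing Implicit Defensive.
Import Order.TTheory GRing.Theory Num.Theory.

Section Promotion.
Context {d : Order.disp_t} {P : finPOrderType d}.
Local Open Scope order_scope.

Definition covers (x y : P) : bool :=
  (x < y) && [forall z : P, ~~ ((x < z) && (z < y))].

Definition isInc (q : nat) (f : P -> nat) : bool :=
  [forall x : P, (1 <= f x <= q)%N] &&
  [forall p1 : P, forall p2 : P, (p1 < p2) ==> (f p1 < f p2)%N].

Definition upd (f : P -> nat) (x : P) (v : nat) : P -> nat :=
  fun y => if y == x then v else f y.

Definition rho (q i : nat) (f : P -> nat) : P -> nat :=
  fun x =>
    if (f x == i) && isInc q (upd f x i.+1) then i.+1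
    else if (f x == i.+1) && isInc q (upd f x i) then i
    else f x.

(* IncPro = rho_{q-1} o ... o rho_1  (rho_1 applied first) *)
Definition IncPro (q : nat) (f : P -> nat) : P -> nat :=
  foldl (fun g i => rho q i g) f (iota 1 q.-1).

(* labelings P -> Z ∪ {□}, with None standing for □ *)
Definition labeling := P -> option int.

(* the slide sigma_i, computed simultaneously from g *)
Definition sigma (i : int) (g : labeling) : labeling :=
  fun x =>
    if (g x == None) && [exists y : P, covers x y && (g y == Some i)] then Some i
    else if (g x == Some i) && [exists z : P, covers z x && (g z == None)] then None
    else g x.

Definition sigma_repl (a b : option int) (g : labeling) : labeling :=
  fun x => if g x == a then b else g x.

Definition jdt (q : nat) (f : P -> nat) : labeling :=
  let g0 : labeling := fun x => Some (Posz (f x)) in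
  let g1 := sigma_repl (Some (Posz 1)) None g0 in
  let g2 := foldl (fun g i => sigma (Posz i) g) g1 (iota 2 q.-1) in
  sigma_repl None (Some (Posz q.+1)) g2.

(* JdtPro(f)(x) = jdt(f)(x) - 1 ; kept as an option so that the
   statement also asserts that jdt(f)(x) is a genuine integer label *)
Definition JdtPro (q : nat) (f : P -> nat) : P -> option int :=
  fun x => omap (fun n : int => (n - 1)%R) (jdt q f x).

End Promotion.

(* Main.v *)
Require Import Defs.
From mathcomp Require Import all_boot all_order all_algebra.
From mathcomp Require Import zify.
Set Implicit Arguments. Unset Strict Implicit. Unset Printing Implicit Defensive.
Import Order.TTheory.

Section Proofs.
Context {d : Order.disp_t} {P : finPOrderType d}.
Local Open Scope order_scope.
Implicit Types (x y z : P) (h : P -> nat).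

Definition itv x y := [set v : P | (x < v) && (v < y)].

Lemma isIncP q h : reflect ((forall x, (1 <= h x <= q)%N) /\
  (forall x y, x < y -> (h x < h y)%N)) (isInc q h).
Proof.
apply: (iffP andP) => [[/forallP H1 /forallP H2]|[H1 H2]]; split.
- exact: H1.
- by move=> x y; move/forallP: (H2 x) => /(_ y) /implyP.
- by apply/forallP.
- by apply/forallP => x; apply/forallP => y; apply/implyP; apply: H2.
Qed.

Lemma inc_le q h x y : isInc q h -> x <= y -> (h x <= h y)%N.
Proof.
move=> /isIncP[_ O]; rewrite le_eqVlt => /orP[/eqP->//|/O]; exact: ltnW.
Qed.

Lemma covers_noint x y : x < y -> ~~ [exists w, ((x < w) && (w < y))%O] -> covers x y.
Proof.
move=> lxy hne; rewrite /covers lxy /=; apply/forallP => w.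
apply: contra hne => h; apply/existsP; by exists w.
Qed.

Lemma card_int_l x w y : x < w -> w < y ->
  (#|itv x w| < #|itv x y|)%N.
Proof.
move=> lxw lwy; rewrite /itv; apply: proper_card; apply/properP; split.
- apply/subsetP => v; rewrite !inE => /andP[-> lvw] /=; exact: lt_trans lvw lwy.
- by exists w; rewrite !inE ?lxw ?lwy ?ltxx //= andbF.
Qed.

Lemma card_int_r x w y : x < w -> w < y ->
  (#|itv w y| < #|itv x y|)%N.
Proof.
move=> lxw lwy; rewrite /itv; apply: proper_card; apply/properP; split.
- apply/subsetP => v; rewrite !inE => /andP[lwv ->]; rewrite andbT; exact: lt_trans lxw lwv.
- by exists w; rewrite !inE ?lxw ?lwy ?ltxx.
Qed.

Lemma covers_exist_n n x y : (#|itv x y| <= n)%N -> x < y ->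
  (exists2 y', covers x y' & y' <= y) /\ (exists2 z', covers z' y & x <= z').
Proof.
elim: n x y => [|n IH] x y hn lxy;
  (have [/existsP[w /andP[lxw lwy]]|hne] := boolP [exists w, ((x < w) && (w < y))%O];
   last by split; [exists y | exists x]; rewrite ?covers_noint ?lexx).
- by have := leq_trans (card_int_l lxw lwy) hn; rewrite ltn0.
- split.
  + have h1 := leq_trans (card_int_l lxw lwy) hn; rewrite ltnS in h1.
    have [[y' c le] _] := IH x w h1 lxw.
    exists y' => //; exact: le_trans le (ltW lwy).
  + have h1 := leq_trans (card_int_r lxw lwy) hn; rewrite ltnS in h1.
    have [_ [z' c le]] := IH w y h1 lwy.
    exists z' => //; exact: le_trans (ltW lxw) le.
Qed.

Lemma covers_exist x y : x < y ->
  (exists2 y', covers x y' & y' <= y) /\ (exists2 z', covers z' y & x <= z').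
Proof. exact: covers_exist_n. Qed.

Lemma upd_up q i h x : isInc q h -> h x = i -> (i < q)%N ->
  isInc q (upd h x i.+1) <-> (forall y, x < y -> (i.+1 < h y)%N).
Proof.
move=> /isIncP[R O] hx iq; split.
- move=> /isIncP[_ O'] y lxy; have := O' _ _ lxy; rewrite /upd eqxx.
  by rewrite gt_eqF.
- move=> H; apply/isIncP; split.
  + move=> z; rewrite /upd; case: eqP => _ //; lia.
  + move=> p1 p2 l12; rewrite /upd.
    case: (eqVneq p1 x) => [e1|n1]; case: (eqVneq p2 x) => [e2|n2].
    * by move: l12; rewrite e1 e2 ltxx.
    * by apply: H; rewrite -e1.
    * have := O _ _ l12; rewrite e2 hx; lia.
    * exact: O.
Qed.

Lemma upd_down q i h x : isInc q h -> h x = i.+1 -> (1 <= i)%N ->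
  isInc q (upd h x i) <-> (forall z, z < x -> (h z < i)%N).
Proof.
move=> /isIncP[R O] hx iq; split.
- move=> /isIncP[_ O'] z lzx; have := O' _ _ lzx; rewrite /upd eqxx.
  by rewrite lt_eqF.
- move=> H; apply/isIncP; split.
  + move=> z; rewrite /upd; case: eqP => [_|_ //]; have := R x; lia.
  + move=> p1 p2 l12; rewrite /upd.
    case: (eqVneq p1 x) => [e1|n1]; case: (eqVneq p2 x) => [e2|n2].
    * by move: l12; rewrite e1 e2 ltxx.
    * have := O _ _ l12; rewrite e1 hx; lia.
    * by apply: H; rewrite -e2.
    * exact: O.
Qed.

Lemma rho_cases q i h x : isInc q h -> (1 <= i < q)%N ->
  [\/ rho q i h x = h x,
      [/\ h x = i, rho q i h x = i.+1 & forall y, x < y -> (i.+1 < h y)%N] |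
      [/\ h x = i.+1, rho q i h x = i & forall z, z < x -> (h z < i)%N]].
Proof.
move=> hI /andP[i1 iq]; rewrite /rho.
case: ifP => [/andP[/eqP hx hU]|_].
  by constructor 2; split => //; apply/(upd_up hI hx iq).
case: ifP => [/andP[/eqP hx hU]|_].
  by constructor 3; split => //; apply/(upd_down hI hx i1).
by constructor 1.
Qed.

Lemma rho_inc q i h : isInc q h -> (1 <= i < q)%N -> isInc q (rho q i h).
Proof.
move=> hI hi; have /isIncP[R O] := hI; apply/isIncP; split.
- move=> x; have := R x; have := hi.
  by case: (rho_cases x hI hi) => [->|[_ -> _]|[_ -> _]]; lia.
- move=> x y lxy; have hxy := O _ _ lxy.
  case: (rho_cases x hI hi) => [->|[hx -> Hx]|[hx -> Hx]];
  case: (rho_cases y hI hi) => [->|[hy -> Hy]|[hy -> Hy]];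
  try (have := Hx y lxy; move=> ?); try (have := Hy x lxy; move=> ?); lia.
Qed.

Definition enc (i v : nat) : option int :=
  if v == i then None else if (v < i)%N then Some (Posz v.+1) else Some (Posz v).

Lemma enc_None i v : (enc i v == None) = (v == i).
Proof. by rewrite /enc; case: (eqVneq v i) => // _; case: ifP. Qed.

Lemma enc_Some i v : (enc i v == Some (Posz i.+1)) = (v == i.+1).
Proof.
rewrite /enc; case: (eqVneq v i) => [->|ne]; first by rewrite eqn_leq ltnn andbF.
case: ifP => lt; apply/eqP/eqP => [[]|e]; try lia; subst v => //; lia.
Qed.

Lemma enc_other i v : v != i -> v != i.+1 -> enc i v = enc i.+1 v.
Proof.
move=> n1 n2; rewrite /enc (negPf n1) (negPf n2).
have -> : (v < i.+1)%N = (v < i)%N by lia.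
by [].
Qed.

Lemma enc_a i : enc i i.+1 = Some (Posz i.+1).
Proof.
rewrite /enc; have -> : (i.+1 == i) = false by lia.
by have -> : (i.+1 < i)%N = false by lia.
Qed.
Lemma enc_b i : enc i.+1 i = Some (Posz i.+1).
Proof.
rewrite /enc; have -> : (i == i.+1) = false by lia.
by have -> : (i < i.+1)%N = true by lia.
Qed.

Lemma sigma_step q i h (g : labeling) : isInc q h -> (1 <= i < q)%N ->
  (forall x, g x = enc i (h x)) ->
  forall x, sigma (Posz i.+1) g x = enc i.+1 (rho q i h x).
Proof.
move=> hI hi gE x; have /andP[i1 iq] := hi.
rewrite /sigma !gE enc_None enc_Some.
under eq_existsb => y do rewrite gE enc_Some.
under [X in (h x == i.+1) && X]eq_existsb => y do rewrite gE enc_None.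
rewrite /rho.
have [hx|nx] := eqVneq (h x) i.
  rewrite hx /= (_ : (i == i.+1) = false) /=; last by lia.
  have Hu := upd_up hI hx iq.
  case: (boolP [exists y, covers x y && (h y == i.+1)]) => [/existsP[y /andP[/andP[lxy _] /eqP hy]]|nex].
    case: ifP => [/Hu/(_ y lxy)|_]; first by rewrite hy ltnn.
    by rewrite enc_b.
  rewrite (_ : isInc q (upd h x i.+1) = true) ?enc_None ?eqxx ?/enc ?eqxx //.
  apply/Hu => y lxy; have /isIncP[_ O] := hI.
  have := O _ _ lxy; rewrite hx leq_eqVlt => /orP[/eqP hy|//].
  have [[y' cy' ley'] _] := covers_exist lxy.
  have := O x y'; have := inc_le hI ley'; move: cy' nex => /[dup] /andP[lxy' _] cy'.
  move=> /existsPn /(_ y'); rewrite cy' /= => /eqP.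
  rewrite hx -hy => ne1 le1 /(_ lxy'); lia.
have [hx|nx1] := eqVneq (h x) i.+1.
  rewrite hx /=.
  have Hd := upd_down hI hx i1.
  case: (boolP [exists z, covers z x && (h z == i)]) => [/existsP[z /andP[/andP[lzx _] /eqP hz]]|nex].
    case: ifP => [/Hd/(_ z lzx)|_]; first by rewrite hz ltnn.
    by rewrite /enc eqxx.
  rewrite (_ : isInc q (upd h x i) = true).
    by rewrite enc_a enc_b.
  apply/Hd => z lzx; have /isIncP[_ O] := hI.
  have := O _ _ lzx; rewrite hx ltnS leq_eqVlt => /orP[/eqP hz|//].
  have [_ [z' cz' lez']] := covers_exist lzx.
  have := O z' x; have := inc_le hI lez'; move: cz' nex => /[dup] /andP[lzx' _] cz'.
  move=> /existsPn /(_ z'); rewrite cz' /= => /eqP.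
  rewrite hx hz => ne1 le1 /(_ lzx'); lia.
rewrite /=.
by rewrite enc_other.
Qed.

Lemma main_inv q f n : isInc q f -> (n < q)%N ->
  isInc q (foldl (fun g i => rho q i g) f (iota 1 n)) /\
  forall x, foldl (fun g i => sigma (Posz i) g)
     (sigma_repl (Some (Posz 1)) None (fun x => Some (Posz (f x)))) (iota 2 n) x
   = enc n.+1 (foldl (fun g i => rho q i g) f (iota 1 n) x).
Proof.
move=> hf; elim: n => [|n IH] hn.
  split => //= x; rewrite /sigma_repl /enc.
  have /isIncP[R _] := hf; have r := R x.
  have -> : (Some (Posz (f x)) == Some (Posz 1)) = (f x == 1) by apply/eqP/eqP => [[]|->].
  case: (eqVneq (f x) 1) => // ne.
  by have -> : (f x < 1)%N = false by lia.
have [hI gE] := IH (ltnW hn).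
have e1 : iota 1 n.+1 = iota 1 n ++ [:: n.+1] by rewrite -(addn1 n) iotaD /= ?add1n ?add2n addn1.
have e2 : iota 2 n.+1 = iota 2 n ++ [:: n.+2] by rewrite -(addn1 n) iotaD /= ?add1n ?add2n addn1.
rewrite e1 e2 !foldl_cat /=.
split; first by apply: rho_inc => //; lia.
apply: sigma_step => //; lia.
Qed.

End Proofs.

Theorem theorem3p8 (d : Order.disp_t) (P : finPOrderType d) (q : nat)
  (hq : (0 < q)%N) (f : P -> nat) (hf : isInc q f) :
  forall x : P, JdtPro q f x = Some (Posz (IncPro q f x)).
Proof.
move=> x; have hq' : (q.-1 < q)%N by rewrite ltn_predL.
have [hI gE] := main_inv hf hq'.
rewrite /JdtPro /jdt /IncPro /sigma_repl gE prednK //.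
have /isIncP[R _] := hI; have r := R x.
move: r; set v := foldl _ f _ x => r.
rewrite /enc; case: (eqVneq v q) => [->|ne] /=; first by congr Some; lia.
have -> : (v < q)%N = true by lia.
by rewrite /=; congr Some; lia.
Qed.
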